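(* For each $n\in\mathbb N$ there is a bijection $s\mapsto T_s$ from $\mathbb{T}_n(\emptyset)$ onto the set of $n$-trees (up to isomorphism) such that for all $s,t\in\mathbb{T}_n(\emptyset)$ we have $s\leq_{\mathbb{T}_n(\emptyset)}t$ if and only if there is an embedding of $n$-trees (satisfying Friedman's strong gap condition) from $T_s$ into $T_t$. In other words, $\mathbb{T}_n(\emptyset)$ is isomorphic to the set of $n$-trees ordered according to Friedman's strong gap condition.
   Context: A tree is a finite partial order $(T,\leq_T)$ with a unique minimal element (the root) such that for each $t\in T$ the set $\{s\mid s\leq_T t\}$ is linearly ordered; $s\wedge t$ denotes the $\leq_T$-maximal common lower bound. An $n$-tree is a tree $T$ with a labelling $l:T\to\{0,\dots,n-1\}$; isomorphic $n$-trees are identified. An embedding of $n$-trees $(S,l)\to(T,l')$ is a function $f:S\to T$ with $f(s\wedge t)=f(s)\wedge f(t)$ for all $s,t\in S$, such that (i) $l'(f(s))=l(s)$ for all $s\in S$; (ii) if $t$ is an immediate successor of $r$ in $S$ and $f(r)<_T s<_T f(t)$, then $l'(s)\geq l(t)$; (iii) if $s<_T f(\mathrm{root}(S))$, then $l'(s)\geq l(\mathrm{root}(S))$. For a partial order $X$, $M(X)$ is the set of finite multisets $[x_0,\dots,x_{m-1}]$ with elements from $X$, with $[x_0,\dots,x_{m-1}]\leq_{M(X)}[y_0,\dots,y_{k-1}]$ iff there is an injection $g:\{0,\dots,m-1\}\to\{0,\dots,k-1\}$ with $x_i\leq_X y_{g(i)}$ for all $i<m$. For $n\in\mathbb N$ and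 a partial order $X$, the set $\mathbb{T}_n(X)$ is generated by: $\overline x\in\mathbb{T}_n(X)$ for each $x\in X$; and $i\star\sigma\in\mathbb{T}_n(X)$ for each $\sigma=[t_0,\dots,t_{m-1}]\in M(\mathbb{T}_n(X))$ and each $i<n$. The relation $\leq_{\mathbb{T}_n(X)}$ is defined recursively (on the sum of heights, $h(\overline x)=0$, $h(i\star[t_0,\dots,t_{m-1}])=\max(\{0\}\cup\{h(t_k)+1\mid k<m\})$) by: $\overline x\leq t$ iff either $t=\overline y$ with $x\leq_X y$, or $t=j\star[t_0,\dots,t_{m-1}]$ and $\overline x\leq t_l$ for some $l<m$; and $i\star\sigma\leq t$ iff either $t=i\star\tau$ with $\sigma\leq_{M(\mathbb{T}_n(X))}\tau$, or $t=j\star[t_0,\dots,t_{m-1}]$ with $j\geq i$ and $i\star\sigma\leq t_l$ for some $l<m$. *)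

(* Defs.v *)
From mathcomp Require Import all_boot.
Set Implicit Arguments. Unset Strict Implicit. Unset Printing Implicit Defensive.

(* Since X is empty, the only terms are i * [t_0,...,t_{m-1}].
   A multiset is represented by a list; equality of terms is multiset
   equality (see [teq]). Labels are required to be < n via [wf]. *)
Inductive tm : Type := Node : nat -> seq tm -> tm.

Definition tm0 : tm := Node 0 [::].

Fixpoint wf (n : nat) (t : tm) : Prop :=
  match t with Node i s => i < n /\ (fix wfl (l : seq tm) : Prop :=
      match l with [::] => True | t :: l' => wf n t /\ wfl l' end) s end.

(* Multiset comparison M(X) relative to a relation R on elements:
   an injection g : {0..m-1} -> {0..k-1} with x_i R y_{g i}. *)
Definition mle (R : tm -> tm -> Prop) (s t : seq tm) : Prop :=
  exists g : 'I_(size s) -> 'I_(size t),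
    injective g /\ forall i : 'I_(size s), R (nth tm0 s i) (nth tm0 t (g i)).

Definition meq (R : tm -> tm -> Prop) (s t : seq tm) : Prop :=
  size s = size t /\
  exists g : 'I_(size s) -> 'I_(size t),
    injective g /\ forall i : 'I_(size s), R (nth tm0 s i) (nth tm0 t (g i)).

Inductive teq : tm -> tm -> Prop :=
| teq_node i s t : meq teq s t -> teq (Node i s) (Node i t).

Inductive tle : tm -> tm -> Prop :=
| tle_mul i s t : mle tle s t -> tle (Node i s) (Node i t)
| tle_sub i s j t (l : 'I_(size t)) : i <= j -> tle (Node i s) (nth tm0 t l) ->
    tle (Node i s) (Node j t).

Record ntree := NTree {
  nsize : nat;
  nle : rel 'I_nsize;
  nlab : 'I_nsize -> nat }.

Definition nlt (T : ntree) (x y : 'I_(nsize T)) : bool := nle x y && (x != y).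

Definition is_minimal (T : ntree) (r : 'I_(nsize T)) : Prop :=
  forall x, nle x r -> x = r.

Definition is_root (T : ntree) (r : 'I_(nsize T)) : Prop :=
  is_minimal r /\ forall r', is_minimal r' -> r' = r.

Definition is_ntree (n : nat) (T : ntree) : Prop :=
  [/\ [/\ reflexive (@nle T), antisymmetric (@nle T) & transitive (@nle T)],
      (exists r : 'I_(nsize T), is_root r),
      (forall t x y : 'I_(nsize T), nle x t -> nle y t -> nle x y || nle y x)
    & forall x : 'I_(nsize T), nlab x < n].

Definition is_meet (T : ntree) (s t m : 'I_(nsize T)) : Prop :=
  [/\ nle m s, nle m t & forall r, nle r s -> nle r t -> nle r m].

Definition imm_succ (T : ntree) (r t : 'I_(nsize T)) : Prop :=
  nlt r t /\ forall s, ~~ (nlt r s && nlt s t).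

Definition embedding (S T : ntree) (f : 'I_(nsize S) -> 'I_(nsize T)) : Prop :=
  [/\ injective f,
      (forall s t m, is_meet s t m -> is_meet (f s) (f t) (f m)),
      (forall s, nlab (f s) = nlab s),
      (forall r t, imm_succ r t -> forall s, nlt (f r) s -> nlt s (f t) ->
          nlab t <= nlab s)
    & (forall rt, is_root rt -> forall s, nlt s (f rt) -> nlab rt <= nlab s)].

Definition ntree_iso (S T : ntree) : Prop :=
  exists g : 'I_(nsize S) -> 'I_(nsize T),
    bijective g /\ (forall x y, nle (g x) (g y) = nle x y) /\
    (forall x, nlab (g x) = nlab x).
Arguments embedding S T f : clear implicits.

(* Main.v *)
Require Import Defs.
From mathcomp Require Import all_boot.
From Stdlib Require Import IndefiniteDescription.
From mathcomp Require Import zify.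
From Stdlib Require Import Lia.
Set Implicit Arguments. Unset Strict Implicit. Unset Printing Implicit Defensive.

Section TmInd.
Variable P : tm -> Prop.
Hypothesis H : forall i l, (forall k, k < size l -> P (nth tm0 l k)) -> P (Node i l).
Fixpoint tm_ind' (t : tm) : P t :=
  match t with Node i l => H i
    ((fix F (l : seq tm) : forall k, k < size l -> P (nth tm0 l k) :=
      match l return forall k, k < size l -> P (nth tm0 l k) with
      | [::] => fun k hk => False_ind _ (notF hk)
      | u :: l' => fun k => match k return k < size (u :: l') -> P (nth tm0 (u :: l') k) with
                  | 0 => fun _ => tm_ind' u
                  | k'.+1 => fun hk => F l' k' hk end end) l) end.
End TmInd.

Lemma wfE n i l : wf n (Node i l) <-> i < n /\ forall k, k < size l -> wf n (nth tm0 l k).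
Proof.
rewrite /=; split=> [[-> H]|[-> H]]; split=> //.
  elim: l H => [|u l IH] //= [Hu Hl] [|k] //= hk; exact: IH.
elim: l H => [|u l IH] //= H; split; first exact: (H 0).
by apply: IH => k hk; apply: (H k.+1).
Qed.

Fixpoint sub (t : tm) (p : seq nat) : option tm :=
  match p with
  | [::] => Some t
  | k :: p' => let: Node _ l := t in if k < size l then sub (nth tm0 l k) p' else None
  end.

Definition valid t p : bool := if sub t p is Some _ then true else false.
Definition lab t p : nat := if sub t p is Some (Node i _) then i else 0.

Lemma valid0 t : valid t [::]. Proof. by []. Qed.
Lemma validC i l k p : valid (Node i l) (k :: p) = (k < size l) && valid (nth tm0 l k) p.
Proof. by rewrite /valid /=; case: ifP. Qed.
Lemma lab0 i l : lab (Node i l) [::] = i. Proof. by []. Qed.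
Lemma labC i l k p : k < size l -> lab (Node i l) (k :: p) = lab (nth tm0 l k) p.
Proof. by rewrite /lab /= => ->. Qed.

Lemma valid_prefix t p q : valid t q -> prefix p q -> valid t p.
Proof.
elim: p q t => [|k p IH] [|k' q] [i l] //.
rewrite !validC prefix_cons => /andP[hk hq] /andP[/eqP hkk hpq]; subst k'.
by rewrite hk (IH _ _ hq hpq).
Qed.

Fixpoint sz (t : tm) : nat := let: Node _ l := t in (sumn (map sz l)).+1.

Lemma nth_le_sumn (l : seq nat) k : k < size l -> nth 0 l k <= sumn l.
Proof. elim: l k => [|a l IH] [|k] //= hk; [exact: leq_addr | exact: leq_trans (IH _ hk) (leq_addl _ _)]. Qed.

Lemma size_le_sumn l : size l <= sumn (map sz l).
Proof. elim: l => [|[i u] l IH] //=; rewrite -addn1 addnC leq_add //. Qed.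

Lemma valid_bound t p : valid t p -> size p < sz t /\ all (fun k => k < sz t) p.
Proof.
elim: p t => [|k p IH] [i l] //= ; rewrite validC => /andP[hk hv].
have hle : sz (nth tm0 l k) <= sumn (map sz l).
  by rewrite -(nth_map tm0 0) // nth_le_sumn // size_map.
have [h1 h2] := IH _ hv; split.
  exact: leq_trans h1 hle.
apply/andP; split.
  exact: leq_trans hk (leq_trans (size_le_sumn l) (leqnSn _)).
apply/allP => x /(allP h2) hx; exact: leq_trans hx (leq_trans hle (leqnSn _)).
Qed.

Fixpoint lcp (p q : seq nat) : seq nat :=
  match p, q with a :: p', b :: q' => if a == b then a :: lcp p' q' else [::] | _, _ => [::] end.

Lemma lcp_prefl p q : prefix (lcp p q) p.
Proof. elim: p q => [|a p IH] [|b q] //=; case: eqP => //= _; by rewrite eqxx IH. Qed.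
Lemma lcp_prefr p q : prefix (lcp p q) q.
Proof. elim: p q => [|a p IH] [|b q] //=; case: eqP => //= ->; by rewrite eqxx IH. Qed.
Lemma lcp_cons k p q : lcp (k :: p) (k :: q) = k :: lcp p q.
Proof. by rewrite /= eqxx. Qed.
Lemma lcp_max r p q : prefix r p -> prefix r q -> prefix r (lcp p q).
Proof.
elim: r p q => [|c r IH] [|a p] [|b q] //; rewrite ?(prefix0s (T:=nat)) //.
rewrite !prefix_cons => /andP[/eqP <- h1] /andP[/eqP <- h2].
by rewrite lcp_cons prefix_cons eqxx IH.
Qed.
Lemma prefix_antisym (p q : seq nat) : prefix p q -> prefix q p -> p = q.
Proof.
elim: p q => [|a p IH] [|b q] // h1 h2; rewrite ?(prefixs0 (T:=nat)) in h1 h2 => //.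
move: h1 h2; rewrite !prefix_cons => /andP[/eqP -> h1] /andP[_ h2].
by rewrite (IH _ h1 h2).
Qed.
Lemma lcp_prefix p q : prefix p q -> lcp p q = p.
Proof. move=> h; apply: prefix_antisym; [exact: lcp_prefl | exact: lcp_max (prefix_refl _) h]. Qed.
Lemma prefix_lcp p q : (lcp p q == p) = prefix p q.
Proof. apply/idP/idP => [/eqP <-|h]; [exact: lcp_prefr | by rewrite lcp_prefix]. Qed.
Lemma prefix_total (p q r : seq nat) : prefix p r -> prefix q r -> prefix p q || prefix q p.
Proof.
elim: p q r => [|a p IH] [|b q] [|c r] h1 h2; rewrite ?(prefix0s (T:=nat)) ?orbT //; rewrite ?(prefixs0 (T:=nat)) in h1 h2 => //.
move: h1 h2; rewrite !prefix_cons => /andP[/eqP -> h1] /andP[/eqP -> h2]; rewrite !eqxx /=; exact: IH h1 h2.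
Qed.
Lemma lcpC p q : lcp p q = lcp q p.
Proof. elim: p q => [|a p IH] [|b q] //=; rewrite eq_sym; case: eqP => // ->; by rewrite IH. Qed.

Lemma size_prefix (p q : seq nat) : prefix p q -> size p <= size q.
Proof. by case/prefixP => w ->; rewrite size_cat leq_addr. Qed.
Definition sprefix (p q : seq nat) := prefix p q && (p != q).
Definition imm (p q : seq nat) := prefix p q && (size q == (size p).+1).
Set Implicit Arguments. Unset Strict Implicit. Unset Printing Implicit Defensive.

Fixpoint cand d N : seq (seq nat) :=
  if d is d'.+1 then [::] :: [seq k :: p | k <- iota 0 N, p <- cand d' N] else [:: [::]].

Lemma cand_mem d N (p : seq nat) : size p <= d -> all (fun k => k < N) p -> p \in cand d N.
Proof.
elim: d p => [|d IH] [|k p] //.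
move=> hs /andP[hk hp]; rewrite in_cons; apply/orP; right.
apply: (allpairs_f (fun k p => k :: p)); first by rewrite mem_iota.
exact: IH.
Qed.

Definition pos t := undup [seq p <- cand (sz t) (sz t) | valid t p].

Lemma mem_pos t p : (p \in pos t) = valid t p.
Proof.
rewrite mem_undup mem_filter; apply/andP/idP => [[] //|h]; split=> //.
have [h1 h2] := valid_bound h; exact: cand_mem (ltnW h1) h2.
Qed.

Lemma uniq_pos t : uniq (pos t). Proof. exact: undup_uniq. Qed.

Lemma pos_gt0 t : 0 < size (pos t).
Proof. have : [::] \in pos t by rewrite mem_pos. by case: (pos t). Qed.

Definition F (s : tm) : ntree :=
  @NTree (size (pos s)) (fun x y => prefix (nth [::] (pos s) x) (nth [::] (pos s) y))
    (fun x => lab s (nth [::] (pos s) x)).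

Definition Pp s (x : 'I_(size (pos s))) : seq nat := nth [::] (pos s) x.
Arguments Pp : clear implicits.
Definition idx s (p : seq nat) : 'I_(size (pos s)) := Ordinal (ltn_pmod (index p (pos s)) (pos_gt0 s)).

Lemma Pp_valid s x : valid s (Pp s x).
Proof. by rewrite -mem_pos mem_nth. Qed.

Lemma Pp_idx s p : valid s p -> Pp s (idx s p) = p.
Proof.
rewrite -mem_pos => h; rewrite /Pp /= modn_small ?index_mem //; exact: nth_index.
Qed.

Lemma idx_Pp s x : idx s (Pp s x) = x.
Proof. apply: val_inj; rewrite /= /Pp index_uniq ?uniq_pos // modn_small //. Qed.

Lemma Pp_inj s : injective (Pp s).
Proof. exact: can_inj (idx_Pp (s:=s)). Qed.

Lemma prefix_size_eq (p q : seq nat) : prefix p q -> size p = size q -> p = q.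
Proof. move=> h e; move: h; rewrite prefixE e take_size => /eqP ->. done. Qed.

Section Fchar.
Variable s : tm.
Implicit Types x y m : 'I_(nsize (F s)).

Lemma nleF x y : nle x y = prefix (Pp s x) (Pp s y). Proof. by []. Qed.
Lemma nltF x y : nlt x y = sprefix (Pp s x) (Pp s y).
Proof. by rewrite /nlt /sprefix nleF (inj_eq (Pp_inj (s:=s))). Qed.

Lemma meetF x y m : is_meet x y m <-> Pp s m = lcp (Pp s x) (Pp s y).
Proof.
split.
  case=> h1 h2 h3; apply: prefix_antisym; first by apply: lcp_max.
  have hv : valid s (lcp (Pp s x) (Pp s y)) by apply: valid_prefix (Pp_valid x) (lcp_prefl _ _).
  have := h3 (idx s (lcp (Pp s x) (Pp s y))); rewrite !nleF Pp_idx //.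
  by apply; [apply: lcp_prefl | apply: lcp_prefr].
move=> e; split; rewrite ?nleF ?e; [exact: lcp_prefl | exact: lcp_prefr |].
move=> r; rewrite !nleF e; exact: lcp_max.
Qed.

Lemma immF x y : imm_succ x y <-> imm (Pp s x) (Pp s y).
Proof.
split.
  case; rewrite nltF => /andP[hp hne] hno; rewrite /imm hp /=.
  case/prefixP: hp hne hno => w e; rewrite e size_cat.
  case: w e => [|a [|b w]] e; first by rewrite cats0 eqxx.
    by rewrite addn1.
  move=> _ hno; exfalso.
  have hv : valid s (Pp s x ++ [:: a]).
    apply: valid_prefix (Pp_valid y) _; rewrite e; apply/prefixP; exists (b :: w); by rewrite -catA.
  have := hno (idx s (Pp s x ++ [:: a])); rewrite !nltF Pp_idx // e /sprefix.
  rewrite prefix_prefix /=.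
  have -> : Pp s x ++ [:: a, b & w] = (Pp s x ++ [:: a]) ++ b :: w by rewrite -catA.
  rewrite prefix_prefix /=.
  move/negP; apply; apply/andP; split; apply/eqP => /(congr1 size); rewrite !size_cat /=; lia.
case/andP => hp /eqP hs; split.
  rewrite nltF /sprefix hp /=; apply/eqP => e; move: hs; rewrite e; lia.
move=> z; rewrite !nltF /sprefix; apply/negP => /andP[/andP[h1 h2] /andP[h3 h4]].
have s1 := size_prefix h1; have s2 := size_prefix h3.
have : size (Pp s x) != size (Pp s z).
  by apply: contra h2 => /eqP e; rewrite (prefix_size_eq h1 e).
have : size (Pp s z) != size (Pp s y).
  by apply: contra h4 => /eqP e; rewrite (prefix_size_eq h3 e).
lia.
Qed.

Lemma rootF x : is_root x <-> Pp s x = [::].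
Proof.
have hm : forall x, Pp s x = [::] -> is_minimal x.
  move=> x0 e z; rewrite nleF e prefixs0 => /eqP e'; apply: (Pp_inj (s:=s)); by rewrite e e'.
have hr : Pp s (idx s [::]) = [::] by rewrite Pp_idx.
split.
  case=> _ h; by rewrite -(h _ (hm _ hr)).
move=> e; split; first exact: hm.
move=> r' hr'; have := hr' x; rewrite nleF e prefix0s => /(_ isT) ->; done.
Qed.
End Fchar.

Record PE (s t : tm) (phi : seq nat -> seq nat) : Prop := PEi {
  pe_v : forall p, valid s p -> valid t (phi p);
  pe_i : forall p q, valid s p -> valid s q -> phi p = phi q -> p = q;
  pe_l : forall p q, valid s p -> valid s q -> phi (lcp p q) = lcp (phi p) (phi q);
  pe_lab : forall p, valid s p -> lab t (phi p) = lab s p;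
  pe_gap : forall p q r, valid s q -> imm p q -> valid t r -> sprefix (phi p) r -> sprefix r (phi q) ->
        lab s q <= lab t r;
  pe_root : forall r, valid t r -> sprefix r (phi [::]) -> lab s [::] <= lab t r }.

Definition psurj (s t : tm) (phi : seq nat -> seq nat) :=
  forall r, valid t r -> exists2 p, valid s p & phi p = r.

Lemma PE_prefix s t phi p q : PE s t phi -> valid s p -> valid s q ->
  prefix (phi p) (phi q) = prefix p q.
Proof.
case=> hv hi hl _ _ _ vp vq.
rewrite -!prefix_lcp -hl //; apply/eqP/eqP => [e|->] //.
apply: hi => //; exact: valid_prefix vp (lcp_prefl _ _).
Qed.

Lemma nlabF s (x : 'I_(nsize (F s))) : nlab x = lab s (Pp s x). Proof. by []. Qed.

Lemma T1 s t f : embedding (F s) (F t) f -> PE s t (fun p => Pp t (f (idx s p))).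
Proof.
case=> hinj hmeet hlab hgap hroot; split.
- move=> p _; exact: Pp_valid.
- move=> p q vp vq /(Pp_inj (s:=t)) /hinj e.
  by rewrite -(Pp_idx vp) -(Pp_idx vq) e.
- move=> p q vp vq.
  have vl : valid s (lcp p q) by apply: valid_prefix vp (lcp_prefl _ _).
  apply/meetF; apply: hmeet; apply/meetF; rewrite !Pp_idx //.
- move=> p vp; have := hlab (idx s p); rewrite !nlabF => ->; by rewrite Pp_idx.
- move=> p q r vq hpq vr h1 h2.
  have vp : valid s p by apply: valid_prefix vq (proj1 (andP hpq)).
  have hs : @imm_succ (F s) (idx s p) (idx s q) by apply/immF; rewrite !Pp_idx.
  have := hgap _ _ hs (idx t r); rewrite !nltF Pp_idx // => /(_ h1 h2).
  by rewrite !nlabF !Pp_idx.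
- move=> r vr h.
  have hr : @is_root (F s) (idx s [::]) by apply/rootF; rewrite Pp_idx.
  have := hroot _ hr (idx t r); rewrite !nltF Pp_idx // => /(_ h).
  by rewrite !nlabF !Pp_idx.
Qed.

Lemma T1s s t (f : 'I_(nsize (F s)) -> 'I_(nsize (F t))) :
  (forall y, exists x, f x = y) -> psurj s t (fun p => Pp t (f (idx s p))).
Proof.
move=> hs r vr; have [x hx] := hs (idx t r); exists (Pp s x); first exact: Pp_valid.
by rewrite idx_Pp hx Pp_idx.
Qed.

Lemma T2 s t phi : PE s t phi -> embedding (F s) (F t) (fun x => idx t (phi (Pp s x))).
Proof.
move=> hP; case: (hP) => hv hi hl hlab hgap hroot; split.
- move=> x y e; apply: (Pp_inj (s:=s)); apply: hi; rewrite ?Pp_valid //.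
  by rewrite -(Pp_idx (hv _ (Pp_valid x))) e Pp_idx // hv // Pp_valid.
- move=> x y m /meetF e; apply/meetF; rewrite !Pp_idx ?hv ?Pp_valid // e hl ?Pp_valid //.
- move=> x; rewrite !nlabF Pp_idx; [exact: hlab (Pp_valid x) | exact: hv (Pp_valid x)].
- move=> r u /immF hru z; rewrite !nltF !Pp_idx ?hv ?Pp_valid // => h1 h2.
  rewrite !nlabF; apply: hgap h1 h2; rewrite ?Pp_valid //.
- move=> rt /rootF hrt z; rewrite !nltF !Pp_idx ?hv ?Pp_valid // hrt => h.
  have := hroot _ (Pp_valid z) h; by rewrite !nlabF hrt.
Qed.

Lemma T2s s t phi : PE s t phi -> psurj s t phi ->
  forall y, exists x, (fun x => idx t (phi (Pp s x))) x = y.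
Proof.
move=> hP hs y; have [p vp e] := hs _ (Pp_valid y); exists (idx s p).
by rewrite /= Pp_idx // e idx_Pp.
Qed.

Lemma inj_surj_bij (A B : finType) (f : A -> B) :
  injective f -> (forall y, exists x, f x = y) -> bijective f.
Proof.
move=> hi hs; have [g hg] := functional_choice _ hs.
exists g => // x; apply: hi; by rewrite hg.
Qed.

Lemma PE_iso s t phi : PE s t phi -> psurj s t phi -> ntree_iso (F s) (F t).
Proof.
move=> hP hs; have hE := T2 hP; exists (fun x => idx t (phi (Pp s x))); split.
  apply: inj_surj_bij; [by case: hE | exact: T2s].
case: (hP) => hv _ _ hlab _ _.
split=> [x y|x]; rewrite ?nleF ?nlabF !Pp_idx ?hv ?Pp_valid //.
  exact: PE_prefix hP (Pp_valid x) (Pp_valid y).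
by rewrite hlab ?Pp_valid.
Qed.

Lemma iso_emb (S T : ntree) : ntree_iso S T ->
  exists f, embedding S T f /\ forall y, exists x, f x = y.
Proof.
case=> g [hb [hle hlab]]; exists g.
have hi := bij_inj hb; case: (hb) => g' c1 c2.
have hlt : forall x y, nlt (g x) (g y) = nlt x y by move=> x y; rewrite /nlt hle (inj_eq hi).
split; last by move=> y; exists (g' y).
split=> //.
- move=> x y m [h1 h2 h3]; split; rewrite ?hle // => r; rewrite -(c2 r) !hle; exact: h3.
- move=> r u [_ hno] z; rewrite -(c2 z) !hlt => h1 h2; have := hno (g' z).
  by rewrite h1 h2.
- move=> rt [hmin _] z; rewrite -(c2 z) hlt /nlt => /andP[h1 h2].
  by move: h2; rewrite (hmin _ h1) eqxx.
Qed.

Lemma sprefix_cons (k : nat) p q : sprefix (k :: p) (k :: q) = sprefix p q.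
Proof. by rewrite /sprefix prefix_cons eqxx eqseq_cons eqxx. Qed.
Lemma imm_cons (k : nat) p q : imm (k :: p) (k :: q) = imm p q.
Proof. by rewrite /imm prefix_cons eqxx. Qed.
Lemma prefix_consE (a : nat) p r : prefix (a :: p) r -> exists2 r', r = a :: r' & prefix p r'.
Proof. case: r => [|b r] //; rewrite prefix_cons => /andP[/eqP <- h]; by exists r. Qed.
Lemma sprefix_consE (a : nat) p r : sprefix (a :: p) r -> exists2 r', r = a :: r' & sprefix p r'.
Proof.
case/andP => /prefix_consE [r' -> h] hne; exists r' => //.
by rewrite /sprefix h; move: hne; rewrite eqseq_cons eqxx.
Qed.
Lemma sprefix_r0 (r : seq nat) : sprefix r [::] = false.
Proof. by case: r. Qed.
Lemma sprefix_0l (r : seq nat) : sprefix [::] r = (r != [::]).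
Proof. by case: r. Qed.
Lemma sprefix_consr (b : nat) r' a p : sprefix (b :: r') (a :: p) -> b = a /\ sprefix r' p.
Proof.
case/andP; rewrite prefix_cons eqseq_cons => /andP[/eqP -> h]; rewrite eqxx /= => hne.
by split=> //; rewrite /sprefix h.
Qed.
Lemma imm_r0 (p : seq nat) : imm p [::] = false.
Proof. by rewrite /imm prefixs0; case: p. Qed.
Lemma imm_0l (q : seq nat) : imm [::] q = (size q == 1).
Proof. by rewrite /imm prefix0s. Qed.
Lemma imm_consl (a : nat) p q : imm (a :: p) q -> exists2 q', q = a :: q' & imm p q'.
Proof.
case/andP => /prefix_consE [q' -> h] /= hs; exists q' => //; by rewrite /imm h.
Qed.
Lemma lcp0l p : lcp [::] p = [::]. Proof. by []. Qed.
Lemma lcp0r p : lcp p [::] = [::]. Proof. by case: p. Qed.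
Lemma lcp_consne (a b : nat) p q : a != b -> lcp (a :: p) (b :: q) = [::].
Proof. by move=> /negPf h; rewrite /= h. Qed.

Lemma tleE s t : tle s t -> let: Node i ls := s in let: Node j lt := t in
  (i = j /\ mle tle ls lt) \/ (exists l : 'I_(size lt), i <= j /\ tle s (nth tm0 lt l)).
Proof.
case=> [i ls lt h | i ls j lt l hij h]; [left | right; exists l]; done.
Qed.

Lemma teqE s t : teq s t -> let: Node i ls := s in let: Node j lt := t in
  i = j /\ meq teq ls lt.
Proof. by case. Qed.

Lemma card_le_inj m n (g : 'I_m -> 'I_n) : injective g -> m <= n.
Proof. move=> h; have := leq_card g h; by rewrite !card_ord. Qed.

Lemma surj_inj m n (g : 'I_m -> 'I_n) : (forall y, exists x, g x = y) -> n <= m.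
Proof.
move=> hs; have [h hh] := functional_choice _ hs.
apply: (@card_le_inj _ _ h) => x y e; by rewrite -(hh x) -(hh y) e.
Qed.

Lemma E2 t : forall s phi, PE s t phi -> tle s t /\ (psurj s t phi -> teq s t).
Proof.
elim/tm_ind': t => j lt IH [i ls] phi hP.
case: (hP) => hv hi hl hlab hgap hroot.
have hv0 := hv _ (valid0 (Node i ls)).
case e0: (phi [::]) => [|m w].
(* case A: root to root *)
- have eij : i = j by have := hlab _ (valid0 (Node i ls)); rewrite e0.
  subst j.
  pose gk k := head 0 (phi [:: k]).
  have A1 : forall k p, valid (Node i ls) (k :: p) -> phi (k :: p) = gk k :: behead (phi (k :: p)).
    move=> k p vkp.
    have vk : valid (Node i ls) [:: k] by apply: valid_prefix vkp _; rewrite prefix_cons eqxx prefix0s.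
    have : prefix (phi [:: k]) (phi (k :: p)).
      by rewrite (PE_prefix hP vk vkp) prefix_cons eqxx prefix0s.
    have : phi [:: k] != [::].
      by apply/eqP => e; have := hi _ _ vk (valid0 _); rewrite e e0 => /(_ erefl).
    rewrite /gk; case: (phi [:: k]) => [|a u] // _ /prefix_consE [r' -> _] //.
  have hgk : forall k, valid (Node i ls) [:: k] -> gk k < size lt.
    move=> k vk; have := hv _ vk; rewrite (A1 _ _ vk) validC; by case/andP.
  have vk1 : forall k : 'I_(size ls), valid (Node i ls) [:: val k].
    move=> k; by rewrite validC ltn_ord.
  pose g (k : 'I_(size ls)) : 'I_(size lt) := Ordinal (hgk _ (vk1 k)).
  have ginj : forall k k', valid (Node i ls) [:: k] -> valid (Node i ls) [:: k'] -> gk k = gk k' -> k = k'.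
    move=> k k' vk vk' e; apply/eqP/negPn/negP => hne.
    have := hl _ _ vk vk'; rewrite lcp_consne // e0 (A1 _ _ vk) (A1 _ _ vk') e lcp_cons.
    done.
  have g_inj : injective g.
    move=> k k' /(congr1 val) /= e; apply: val_inj; exact: ginj (vk1 _) (vk1 _) e.
  pose phik (k : nat) p := behead (phi (k :: p)).
  have hPk : forall k : 'I_(size ls), PE (nth tm0 ls k) (nth tm0 lt (g k)) (phik k).
    move=> k; have vsk : forall p, valid (nth tm0 ls k) p -> valid (Node i ls) (val k :: p).
      by move=> p vp; rewrite validC ltn_ord.
    have Ak : forall p, valid (nth tm0 ls k) p -> phi (val k :: p) = val (g k) :: phik k p.
      move=> p vp; exact: A1 (vsk _ vp).
    split.
    + move=> p vp; have := hv _ (vsk _ vp); by rewrite Ak // validC; case/andP.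
    + move=> p q vp vq e; have : phi (val k :: p) = phi (val k :: q) by rewrite !Ak // e.
      by move/(hi _ _ (vsk _ vp) (vsk _ vq)) => [].
    + move=> p q vp vq.
      have vl : valid (nth tm0 ls k) (lcp p q) by apply: valid_prefix vp (lcp_prefl _ _).
      have := hl _ _ (vsk _ vp) (vsk _ vq); rewrite lcp_cons Ak // !Ak // lcp_cons.
      by case.
    + move=> p vp; have := hlab _ (vsk _ vp); rewrite Ak // labC ?ltn_ord // labC ?ltn_ord //.
    + move=> p q r vq hpq vr h1 h2.
      have := hgap (val k :: p) (val k :: q) (val (g k) :: r) (vsk _ vq); rewrite imm_cons validC ltn_ord vr.
      rewrite Ak ?(valid_prefix vq (proj1 (andP hpq))) // Ak // !sprefix_cons.
      move=> /(_ hpq isT h1 h2); rewrite labC ?ltn_ord // labC ?ltn_ord //.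
    + move=> r vr h.
      have := hgap [::] [:: val k] (val (g k) :: r) (vk1 k); rewrite imm_0l validC ltn_ord vr.
      rewrite e0 (Ak [::]) ?valid0 // sprefix_cons sprefix_0l => /(_ isT isT isT h).
      rewrite labC ?ltn_ord // labC ?ltn_ord //.
  have IHk : forall k : 'I_(size ls), tle (nth tm0 ls k) (nth tm0 lt (g k)) /\
       (psurj (nth tm0 ls k) (nth tm0 lt (g k)) (phik k) -> teq (nth tm0 ls k) (nth tm0 lt (g k))).
    move=> k; exact: IH (ltn_ord (g k)) _ _ (hPk k).
  split.
    apply: tle_mul; exists g; split=> // k; exact: (proj1 (IHk k)).
  move=> hs; apply: teq_node.
  have g_surj : forall y, exists x, g x = y.
    move=> y; have vy : valid (Node i lt) [:: val y] by rewrite validC ltn_ord.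
    have [[|k p] vp ep] := hs _ vy; first by rewrite e0 in ep.
    have vk : valid (Node i ls) [:: k] by apply: valid_prefix vp _; rewrite prefix_cons eqxx prefix0s.
    have hk : k < size ls by move: vk; rewrite validC; case/andP.
    exists (Ordinal hk); apply: val_inj => /=.
    by move: ep; rewrite (A1 _ _ vp) => -[].
  split.
    by apply/eqP; rewrite eqn_leq (card_le_inj g_inj) (surj_inj g_surj).
  exists g; split=> // k; apply: (proj2 (IHk k)) => r vr.
  have vr' : valid (Node i lt) (val (g k) :: r) by rewrite validC ltn_ord vr.
  have [[|k' p] vp ep] := hs _ vr'; first by rewrite e0 in ep.
  have vk' : valid (Node i ls) [:: k'] by apply: valid_prefix vp _; rewrite prefix_cons eqxx prefix0s.
  move: ep; rewrite (A1 _ _ vp) => -[ek er].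
  have ekk : k' = val k by apply: ginj vk' (vk1 k) ek.
  subst k'; exists p; last by rewrite /phik er.
  by move: vp; rewrite validC; case/andP.
(* case B: root maps below the root *)
- have hm : m < size lt by move: hv0; rewrite e0 validC; case/andP.
  have A2 : forall p, valid (Node i ls) p -> phi p = m :: behead (phi p).
    move=> p vp; have : prefix (phi [::]) (phi p) by rewrite (PE_prefix hP (valid0 _) vp) prefix0s.
    by rewrite e0 => /prefix_consE [r' -> _].
  pose psi p := behead (phi p).
  have hPs : PE (Node i ls) (nth tm0 lt m) psi.
    split.
    + move=> p vp; have := hv _ vp; rewrite (A2 _ vp) validC; by case/andP.
    + move=> p q vp vq e; apply: hi => //; rewrite (A2 _ vp) (A2 _ vq); congr (_ :: _); exact: e.
    + move=> p q vp vq.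
      have vl : valid (Node i ls) (lcp p q) by apply: valid_prefix vp (lcp_prefl _ _).
      have := hl _ _ vp vq; rewrite (A2 _ vl) (A2 _ vp) (A2 _ vq) lcp_cons; by case.
    + move=> p vp; have := hlab _ vp; by rewrite (A2 _ vp) labC.
    + move=> p q r vq hpq vr h1 h2.
      have vp : valid (Node i ls) p by apply: valid_prefix vq (proj1 (andP hpq)).
      have := hgap p q (m :: r) vq hpq; rewrite validC hm vr (A2 _ vp) (A2 _ vq) !sprefix_cons.
      move=> /(_ isT h1 h2); by rewrite labC.
    + move=> r vr h.
      have := hroot (m :: r); rewrite validC hm vr (A2 _ (valid0 _)) sprefix_cons.
      move=> /(_ isT h); by rewrite labC.
  have hij : i <= j.
    have := hroot [::] (valid0 _); rewrite e0 sprefix_0l => /(_ isT); done.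
  split.
    apply: (@tle_sub i ls j lt (Ordinal hm)) => //; exact: (proj1 (IH _ hm _ _ hPs)).
  move=> hs; have [p vp ep] := hs _ (valid0 _).
  by move: ep; rewrite (A2 _ vp).
Qed.

Definition mulphi n m (g : 'I_n -> 'I_m) (Phi : 'I_n -> seq nat -> seq nat) (p : seq nat) : seq nat :=
  match p with [::] => [::]
  | k :: p' => match insub k with Some o => val (g o) :: Phi o p' | None => [::] end end.

Lemma mulphi0 n m g Phi : @mulphi n m g Phi [::] = [::]. Proof. by []. Qed.
Lemma mulphiC n m g Phi (o : 'I_n) p : @mulphi n m g Phi (val o :: p) = val (g o) :: Phi o p.
Proof. by rewrite /= valK. Qed.

Lemma validE i ls p : valid (Node i ls) p ->
  p = [::] \/ exists o : 'I_(size ls), exists2 p', p = val o :: p' & valid (nth tm0 ls o) p'.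
Proof.
case: p => [|k p]; [by left | rewrite validC => /andP[hk hp]; right].
by exists (Ordinal hk); exists p.
Qed.

Lemma build_mul (i : nat) ls lt (g : 'I_(size ls) -> 'I_(size lt)) (Phi : 'I_(size ls) -> seq nat -> seq nat) :
  injective g -> (forall o : 'I_(size ls), PE (nth tm0 ls o) (nth tm0 lt (g o)) (Phi o)) ->
  PE (Node i ls) (Node i lt) (mulphi g Phi).
Proof.
move=> ginj hP; split.
- move=> p /validE [->|[o [p' -> vp]]]; first exact: valid0.
  by rewrite mulphiC validC ltn_ord (pe_v (hP o)).
- move=> p q /validE [->|[o [p' -> vp]]] /validE [->|[o' [q' -> vq]]] //;
    rewrite ?mulphiC ?mulphi0 //.
  move=> [/val_inj /ginj e]; subst o' => e; congr (_ :: _); exact: (pe_i (hP o)) e.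
- move=> p q /validE [->|[o [p' -> vp]]] /validE [->|[o' [q' -> vq]]] //;
    rewrite ?lcp0l ?lcp0r ?mulphi0 ?lcp0l ?lcp0r //.
  case: (eqVneq o o') => [e|hne]; first subst o'.
    by rewrite lcp_cons !mulphiC lcp_cons (pe_l (hP o) vp vq).
  rewrite lcp_consne; last by apply: contra hne => /eqP /val_inj ->.
  rewrite !mulphiC lcp_consne //; apply: contra hne => /eqP /val_inj /ginj ->; done.
- move=> p /validE [->|[o [p' -> vp]]] //.
  by rewrite mulphiC !labC ?ltn_ord // (pe_lab (hP o)).
- move=> p q r /validE [->|[o [q' -> vq]]]; first by rewrite imm_r0.
  case: p => [|a p'].
    rewrite imm_0l => /eqP [] hq'; move: hq' vq; case: q' => // _ vq.
    case: r => [|b r'] vr; first by rewrite sprefix_r0.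
    rewrite ?mulphi0 mulphiC => _ /sprefix_consr [eb h]; subst b.
    move: vr; rewrite validC => /andP[_ vr].
    rewrite !labC ?ltn_ord //; exact: (pe_root (hP o)).
  move=> /imm_consl [q'' [ea eq] hpq]; subst a q''.
  rewrite !mulphiC => vr /sprefix_consE [r' er h1]; subst r.
  rewrite sprefix_cons => h2; move: vr; rewrite validC => /andP[_ vr].
  rewrite !labC ?ltn_ord //; exact: (pe_gap (hP o)) vq hpq vr h1 h2.
- by move=> r _; rewrite mulphi0 sprefix_r0.
Qed.

Lemma build_mul_surj (i : nat) ls lt (g : 'I_(size ls) -> 'I_(size lt)) (Phi : 'I_(size ls) -> seq nat -> seq nat) :
  (forall y, exists x, g x = y) -> (forall o : 'I_(size ls), psurj (nth tm0 ls o) (nth tm0 lt (g o)) (Phi o)) ->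
  psurj (Node i ls) (Node i lt) (mulphi g Phi).
Proof.
move=> gs hs r /validE [->|[o [r' -> vr]]]; first by exists [::].
have [x ex] := gs o; subst o.
have [p' vp ep] := hs x _ vr; exists (val x :: p'); last by rewrite mulphiC ep.
by rewrite validC ltn_ord.
Qed.

Lemma E1 t : forall s, tle s t -> exists phi, PE s t phi.
Proof.
elim/tm_ind': t => j lt IH [i ls] /tleE [[eij [g [ginj hg]]]|[l [hij hl]]].
- subst j.
  have : forall o : 'I_(size ls), exists phi, PE (nth tm0 ls o) (nth tm0 lt (g o)) phi.
    move=> o; exact: IH (ltn_ord _) _ (hg o).
  case/functional_choice => Phi hPhi; exists (mulphi g Phi); exact: build_mul.
- have [psi hp] := IH _ (ltn_ord l) _ hl.
  exists (fun p => val l :: psi p); split.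
  + by move=> p vp; rewrite validC ltn_ord (pe_v hp).
  + by move=> p q vp vq [] /(pe_i hp); apply.
  + by move=> p q vp vq; rewrite lcp_cons (pe_l hp).
  + by move=> p vp; rewrite labC ?ltn_ord // (pe_lab hp).
  + move=> p q r vq hpq vr /sprefix_consE [r' er h1]; subst r; rewrite sprefix_cons => h2.
    move: vr; rewrite validC => /andP[_ vr]; rewrite labC ?ltn_ord //; exact: (pe_gap hp) vq hpq vr h1 h2.
  + case=> [|b r'] vr; first by rewrite !lab0.
    case/sprefix_consr => eb h; subst b; move: vr; rewrite validC => /andP[_ vr].
    rewrite labC ?ltn_ord //; exact: (pe_root hp).
Qed.

Lemma E1eq t : forall s, teq s t -> exists phi, PE s t phi /\ psurj s t phi.
Proof.
elim/tm_ind': t => j lt IH [i ls] /teqE [eij [hsz [g [ginj hg]]]]; subst j.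
have : forall o : 'I_(size ls), exists phi, PE (nth tm0 ls o) (nth tm0 lt (g o)) phi /\
    psurj (nth tm0 ls o) (nth tm0 lt (g o)) phi.
  move=> o; exact: IH (ltn_ord _) _ (hg o).
case/functional_choice => Phi hPhi; exists (mulphi g Phi); split.
  apply: build_mul => // o; exact: (proj1 (hPhi o)).
apply: build_mul_surj => [y|o]; last exact: (proj2 (hPhi o)).
have hc : #|'I_(size lt)| <= #|'I_(size ls)| by rewrite !card_ord hsz.
have /codomP [x ->] := inj_card_onto ginj hc y; by exists x.
Qed.

Lemma wf_lab n s p : wf n s -> valid s p -> lab s p < n.
Proof.
elim: p s => [|k p IH] [i l] /wfE [hi hl]; first by rewrite lab0.
rewrite validC => /andP[hk vp]; rewrite labC //; exact: IH (hl _ hk) vp.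
Qed.

Lemma F_ntree n s : wf n s -> is_ntree n (F s).
Proof.
move=> hw; split.
- split.
  + move=> x; exact: prefix_refl.
  + move=> x y /andP[h1 h2]; apply: (Pp_inj (s:=s)); exact: prefix_antisym h1 h2.
  + move=> x y z; exact: prefix_trans.
- exists (idx s [::]); apply/rootF; by rewrite Pp_idx.
- move=> t x y; exact: prefix_total.
- move=> x; exact: wf_lab hw (Pp_valid x).
Qed.

Lemma claim2 s t : teq s t <-> ntree_iso (F s) (F t).
Proof.
split.
  case/E1eq => phi [hP hs]; exact: PE_iso hP hs.
case/iso_emb => f [hf hs]; exact: (proj2 (E2 (T1 hf)) (T1s hs)).
Qed.

Lemma claim4 s t : tle s t <-> exists f, embedding (F s) (F t) f.
Proof.
split.
  case/E1 => phi hP; eexists; exact: T2 hP.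
case=> f hf; exact: (proj1 (E2 (T1 hf))).
Qed.

Section Gen.
Variable (n : nat) (T : ntree).
Hypothesis hT : is_ntree n T.
Local Notation V := 'I_(nsize T).

Definition isucc (x y : V) : bool := nlt x y && [forall z, ~~ (nlt x z && nlt z y)].
Definition children (x : V) : seq V := [seq y <- enum V | isucc x y].

Fixpoint vp (x : V) (p : seq nat) : bool :=
  match p with [::] => true | k :: p' => (k < size (children x)) && vp (nth x (children x) k) p' end.
Fixpoint walk (x : V) (p : seq nat) : V :=
  match p with [::] => x | k :: p' => walk (nth x (children x) k) p' end.
Fixpoint tof (d : nat) (x : V) : tm :=
  match d with 0 => Node (nlab x) [::] | d'.+1 => Node (nlab x) (map (tof d') (children x)) end.

Definition hgt (x : V) := #|[set w | nlt w x]|.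

Let hrefl : reflexive (@nle T). Proof. by case: hT => -[]. Qed.
Let hanti : antisymmetric (@nle T). Proof. by case: hT => -[]. Qed.
Let htrans : transitive (@nle T). Proof. by case: hT => -[]. Qed.
Let hlin : forall t x y : V, nle x t -> nle y t -> nle x y || nle y x. Proof. by case: hT. Qed.
Let hlab : forall x : V, nlab x < n. Proof. by case: hT. Qed.

Lemma nlt_trans_l (x y z : V) : nlt x y -> nle y z -> nlt x z.
Proof.
case/andP => h1 h2 h3; rewrite /nlt (htrans h1 h3) /=; apply: contra h2 => /eqP e; subst z.
by apply/eqP; apply: hanti; rewrite h1 h3.
Qed.

Lemma hgt_lt (x y : V) : nlt x y -> hgt x < hgt y.
Proof.
move=> hxy; apply: proper_card; apply/properP; split.
  apply/subsetP => w; rewrite !inE => hw; apply: nlt_trans_l hw (proj1 (andP hxy)).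
exists x; rewrite !inE //; by rewrite /nlt eqxx andbF.
Qed.

Lemma hgt_bound (x : V) : hgt x < nsize T.
Proof.
rewrite -[nsize T]card_ord -cardsT; apply: proper_card; apply/properP; split.
  exact: subsetT.
by exists x; rewrite !inE // /nlt eqxx andbF.
Qed.

Lemma child_isucc (x : V) k : k < size (children x) -> isucc x (nth x (children x) k).
Proof. move=> hk; have := mem_nth x hk; by rewrite mem_filter => /andP[]. Qed.

Lemma child_lt (x : V) k : k < size (children x) -> nlt x (nth x (children x) k).
Proof. by move/child_isucc/andP => []. Qed.

Lemma uniq_children (x : V) : uniq (children x).
Proof. apply: filter_uniq; exact: enum_uniq. Qed.

Lemma vp_hgt (x : V) p : vp x p -> hgt x + size p <= hgt (walk x p).
Proof.
elim: p x => [|k p IH] x /=; first by rewrite addn0.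
case/andP => hk hp; have := IH _ hp; have := hgt_lt (child_lt hk); lia.
Qed.

Lemma walk_ge (x : V) p : vp x p -> nle x (walk x p).
Proof.
elim: p x => [|k p IH] x /=; first by rewrite hrefl.
case/andP => hk hp; apply: htrans (IH _ hp); exact: (proj1 (andP (child_lt hk))).
Qed.

Lemma walk_cat (x : V) p q : walk x (p ++ q) = walk (walk x p) q.
Proof. by elim: p x => [|k p IH] x //=. Qed.

Lemma vp_cat (x : V) p q : vp x (p ++ q) = vp x p && vp (walk x p) q.
Proof. elim: p x => [|k p IH] x //=; by rewrite IH andbA. Qed.

Lemma prefix_walk (x : V) p q : vp x q -> prefix p q -> nle (walk x p) (walk x q).
Proof.
move=> vq /prefixP [w e]; subst q; rewrite walk_cat; apply: walk_ge.
by move: vq; rewrite vp_cat => /andP[].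
Qed.

Lemma walk_prefix (x : V) p q : vp x p -> vp x q -> nle (walk x p) (walk x q) -> prefix p q.
Proof.
elim: p x q => [|k p IH] x q; first by rewrite prefix0s.
case: q => [|k' q] /= /andP[hk hp]; set c := nth x (children x) k.
  move=> _ hle; exfalso.
  have hxc := child_lt hk; have h2 := htrans (walk_ge hp) hle.
  move: hxc; rewrite /nlt => /andP[h1 hne]; move: hne.
  have /hanti e : nle x (nth x (children x) k) && nle (nth x (children x) k) x by rewrite h1 h2.
  by rewrite -e eqxx.
case/andP => hk' hq hle; set c' := nth x (children x) k' in hq hle.
have h1 := htrans (walk_ge hp) hle; have h2 := walk_ge hq.
have ecc : c = c'.
  have := hlin h1 h2; have := child_isucc hk; have := child_isucc hk'.
  rewrite -/c -/c' /isucc => /andP[hxc' /forallP hno'] /andP[hxc /forallP hno].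
  case/orP => hcc; apply/eqP/negPn/negP => hne.
    by have := hno' c; rewrite hxc /nlt hcc hne.
  by have := hno c'; rewrite hxc' /nlt hcc eq_sym hne.
have ekk : k = k' by apply/eqP; rewrite -(nth_uniq x hk hk' (uniq_children x)) -/c -/c' ecc.
subst k'; rewrite eqxx /=; apply: IH hp hq _; by rewrite -/c.
Qed.

Lemma walk_inj (x : V) p q : vp x p -> vp x q -> walk x p = walk x q -> p = q.
Proof.
move=> vp' vq e; apply: prefix_antisym; [apply: walk_prefix vp' vq _ | apply: walk_prefix vq vp' _];
  by rewrite e hrefl.
Qed.

Variable r : V.
Hypothesis hr : is_root r.

Lemma root_le (y : V) : nle r y.
Proof.
move: {2}(hgt y) (leqnn (hgt y)) => h; elim: h y => [|h IH] y hy.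
  case: (boolP [exists x, nle x y && (x != y)]).
    case/existsP => x hx; have := hgt_lt hx; lia.
  move=> hno; have hmin : is_minimal y.
    move=> x hx; apply/eqP; move: hno; rewrite negb_exists => /forallP /(_ x).
    by rewrite hx /= negbK.
  by rewrite ((proj2 hr) _ hmin) hrefl.
case: (boolP [exists x, nle x y && (x != y)]).
  case/existsP => x hx; have := hgt_lt hx => hlt.
  apply: htrans (IH x _) (proj1 (andP hx)); lia.
move=> hno; have hmin : is_minimal y.
  move=> x hx; apply/eqP; move: hno; rewrite negb_exists => /forallP /(_ x).
  by rewrite hx /= negbK.
by rewrite ((proj2 hr) _ hmin) hrefl.
Qed.

Lemma reach (y : V) : exists2 p, vp r p & walk r p = y.
Proof.
move: {2}(hgt y) (leqnn (hgt y)) => h; elim: h y => [|h IH] y hy.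
  case: (eqVneq y r) => [->|hne]; first by exists [::].
  have : nlt r y by rewrite /nlt root_le eq_sym hne.
  move/hgt_lt; lia.
case: (eqVneq y r) => [->|hne]; first by exists [::].
have hry : nlt r y by rewrite /nlt root_le eq_sym hne.
case: (@arg_maxnP _ r (fun z => nlt z y) hgt hry) => z hzy hmax.
have hz : hgt z <= h by have := hgt_lt hzy; lia.
have [p vpz wz] := IH z hz.
have hs : isucc z y.
  rewrite /isucc hzy /=; apply/forallP => w; apply/negP => /andP[h1 h2].
  have := hmax w h2; have := hgt_lt h1; lia.
have hin : y \in children z by rewrite mem_filter hs mem_enum.
exists (rcons p (index y (children z))).
  by rewrite -cats1 vp_cat vpz wz /= index_mem hin.
by rewrite -cats1 walk_cat wz /= nth_index.
Qed.

Lemma sub_tof p : forall d (x : V), vp x p -> size p <= d ->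
  sub (tof d x) p = Some (tof (d - size p) (walk x p)).
Proof.
elim: p => [|k p IH] [|d] x //=; rewrite ?subn0 //.
case/andP => hk hp hs; rewrite size_map hk (nth_map x) // IH //.
Qed.

Lemma valid_tof p : forall d (x : V), valid (tof d x) p -> vp x p.
Proof.
elim: p => [|k p IH] [|d] x //; rewrite validC //= size_map => /andP[hk].
rewrite hk (nth_map x) //=; exact: IH.
Qed.

Lemma lab_tof p d (x : V) : vp x p -> size p <= d -> lab (tof d x) p = nlab (walk x p).
Proof. move=> hp hs; rewrite /lab sub_tof //; by case: (d - size p). Qed.

Lemma wf_tof d (x : V) : wf n (tof d x).
Proof.
elim: d x => [|d IH] x; apply/wfE; split=> //= k; rewrite size_map => hk.
by rewrite (nth_map x).
Qed.

Lemma claim3_gen : exists s, wf n s /\ ntree_iso (F s) T.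
Proof.
pose s := tof (nsize T) r; exists s; split; first exact: wf_tof.
have hsz : forall p, vp r p -> size p <= nsize T.
  move=> p hp; have := vp_hgt hp; have := hgt_bound (walk r p); lia.
have hval : forall p, vp r p -> valid s p.
  move=> p hp; by rewrite /valid /s sub_tof ?hsz.
have hvp : forall x, vp r (Pp s x) := fun x => valid_tof (Pp_valid x).
exists (fun x => walk r (Pp s x)); split.
  apply: inj_surj_bij.
    move=> x y e; apply: (Pp_inj (s:=s)); exact: walk_inj (hvp x) (hvp y) e.
  move=> y; have [p vp' <-] := reach y; exists (idx s p); by rewrite Pp_idx // hval.
split=> [x y|x].
  rewrite nleF; apply/idP/idP; [exact: walk_prefix | exact: prefix_walk].
by rewrite nlabF lab_tof ?hsz.
Qed.
End Gen.

Theorem proposition5p3 (n : nat) :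
  exists F : tm -> ntree,
    [/\ (forall s, wf n s -> is_ntree n (F s)),
        (forall s t, wf n s -> wf n t -> (teq s t <-> ntree_iso (F s) (F t))),
        (forall T, is_ntree n T -> exists s, wf n s /\ ntree_iso (F s) T)
      & (forall s t, wf n s -> wf n t ->
           (tle s t <-> exists f, embedding (F s) (F t) f))].
Proof.
exists F; split.
- move=> s; exact: F_ntree.
- move=> s t _ _; exact: claim2.
- move=> T hT; have hT' := hT; case: hT' => _ [r hr] _ _; exact: (@claim3_gen n T hT r hr).
- move=> s t _ _; exact: claim4.
Qed.
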